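(* Let $G$ be a finite group and $\mathsf{T}$ a $G$-transfer system. Let $S$ and $R$ be two minimal generating sets for $\mathsf{T}$. Then there exists a bijection $f\colon S\to R$ such that for every $n\in\mathbb{N}$, $f$ sends each element of $S_n\setminus S_{n+1}$ to an element of $R_n\setminus R_{n+1}$.
   Context: For a finite group $G$, an arrow is a pair $(H,K)$ of subgroups with $H\leqslant K$; it is an identity arrow if $H=K$. A $G$-transfer system is a set $\mathsf{T}$ of arrows containing all identity arrows and closed under composition ($(H,K),(K,L)\in\mathsf{T}\Rightarrow(H,L)\in\mathsf{T}$), conjugation ($(H,K)\in\mathsf{T}\Rightarrow(gHg^{-1},gKg^{-1})\in\mathsf{T}$ for all $g\in G$) and restriction ($(H,K)\in\mathsf{T}$, $L\leqslant K\Rightarrow(H\cap L,L)\in\mathsf{T}$). For a set $S$ of non-identity arrows, $\langle S\rangle$ is the smallest transfer system containing $S$. A minimal generating set of $\mathsf{T}$ is a set $S\subseteq\mathsf{T}$ of non-identity arrows with $\langle S\rangle=\mathsf{T}$ and $\langle S\setminus\{s\}\rangle\subsetneq\mathsf{T}$ for all $s\in S$. For a subgroup $H$, let $P(H)$ be the sum of the exponents in the prime factorization of $|H|$ (i.e. the number of prime factors of $|H|$ counted with multiplicity). For a set $S$ of non-identity arrows and $N\in\mathbb{N}$, put $S_N=\{(K,H)\in S : P(K)\geqslant N\}$, where $(K,H)$ denotes an arrow with $K\leqslant H$. *)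

(* Defs.v *)
From mathcomp Require Import all_boot all_fingroup.
Set Implicit Arguments. Unset Strict Implicit. Unset Printing Implicit Defensive.
Local Open Scope group_scope.

Section TransferSystems.
Variable gT : finGroupType.

(* A pair (H, K) of subgroups of G := [set: gT]; it is an arrow iff H \subset K. *)
Definition arrow := ({group gT} * {group gT})%type.

Definition is_arrow (a : arrow) : bool := a.1 \subset a.2.

Definition transfer_systemb (T : {set arrow}) : bool :=
  [&& [forall a in T, is_arrow a],
      [forall H : {group gT}, (H, H) \in T],
      [forall H : {group gT}, forall K : {group gT}, forall L : {group gT},
          ((H, K) \in T) && ((K, L) \in T) ==> ((H, L) \in T)],
      [forall H : {group gT}, forall K : {group gT}, forall g : gT,
          ((H, K) \in T) ==> (((H :^ g)%G, (K :^ g)%G) \in T)] &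
      [forall H : {group gT}, forall K : {group gT}, forall L : {group gT},
          ((H, K) \in T) && (L \subset K) ==> (((H :&: L)%G, L) \in T)]].

Definition transfer_system (T : {set arrow}) : Prop := transfer_systemb T.

Definition generated (S : {set arrow}) : {set arrow} :=
  [set a | [forall T : {set arrow}, transfer_systemb T && (S \subset T) ==> (a \in T)]].

Definition non_identity_arrows (S : {set arrow}) : bool :=
  [forall a in S, is_arrow a && (a.1 != a.2)].

Definition minimal_generating_set (S T : {set arrow}) : Prop :=
  [/\ non_identity_arrows S, S \subset T, generated S = T &
      forall s, s \in S -> generated (S :\ s) \proper T].

Definition Pfac (H : {group gT}) : nat :=
  \sum_(p <- primes #|H|) logn p #|H|.

Definition level_set (S : {set arrow}) (N : nat) : {set arrow} :=
  [set a in S | N <= Pfac a.1].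

End TransferSystems.

(* Main.v *)
From mathcomp Require Import all_boot all_fingroup.
Set Implicit Arguments. Unset Strict Implicit. Unset Printing Implicit Defensive.

Require Import Defs.
Definition pf (n : nat) := \sum_(p <- primes n) logn p n.

Lemma pfE N n : n < N -> pf n = \sum_(p < N) logn p n.
Proof.
move=> nN; rewrite /pf -(big_mkord (fun _ => true) (fun p => logn p n)) /index_iota subn0.
have pe : perm_eq (primes n) [seq p <- iota 0 N | p \in primes n].
  apply: uniq_perm; first exact: primes_uniq.
    by apply: filter_uniq; apply: iota_uniq.
  move=> p; rewrite mem_filter mem_iota /= add0n.
  case pP: (p \in primes n) => //=.
  move: pP; rewrite mem_primes => /and3P[_ n0 pn].
  by apply/esym; apply: (leq_ltn_trans _ nN); apply: dvdn_leq.
rewrite (perm_big _ pe) big_filter big_mkcond /=.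
apply: eq_bigr => p _; case: ifP => // /negbT.
by rewrite -logn_gt0 lt0n negbK => /eqP ->.
Qed.

Lemma pfM d k : 0 < d -> 0 < k -> pf (d * k) = pf d + pf k.
Proof.
move=> d0 k0; rewrite !(pfE (N := (d * k).+1)) ?ltnS ?leq_pmulr ?leq_pmull //.
rewrite -big_split /=; apply: eq_bigr => p _; exact: lognM.
Qed.

Lemma pf_gt0 k : 1 < k -> 0 < pf k.
Proof.
move=> k1; rewrite /pf.
have : pdiv k \in primes k by rewrite mem_primes pdiv_prime // pdiv_dvd ltnW.
case E: (primes k) => [//|p s] _; rewrite big_cons.
by apply: leq_trans (leq_addr _ _); rewrite logn_gt0 E mem_head.
Qed.

Lemma pf_mono d m : 0 < m -> d %| m -> pf d <= pf m.
Proof.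
move=> m0 /dvdnP[k mE]; subst m.
have k0 : 0 < k by move: m0; rewrite muln_gt0 => /andP[].
have d0 : 0 < d by move: m0; rewrite muln_gt0 => /andP[].
by rewrite mulnC pfM // leq_addr.
Qed.

Lemma pf_strict d m : 0 < m -> d %| m -> d < m -> pf d < pf m.
Proof.
move=> m0 /dvdnP[k mE] dm; subst m.
have k0 : 0 < k by move: m0; rewrite muln_gt0 => /andP[].
have d0 : 0 < d by move: m0; rewrite muln_gt0 => /andP[].
have k1 : 1 < k.
  rewrite ltnNge; apply/negP => k1.
  have k1' : k = 1 by apply/eqP; rewrite eqn_leq k1.
  by move: dm; rewrite k1' mul1n ltnn.
rewrite mulnC pfM // -{1}(addn0 (pf d)) ltn_add2l; exact: pf_gt0.
Qed.

Local Open Scope group_scope.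
Section TS.
Variable gT : finGroupType.
Implicit Types (T S R X U D : {set arrow gT}) (H K L : {group gT}).

Definition lvl (a : arrow gT) := Pfac a.1.
Definition allA : {set arrow gT} := [set a | is_arrow a].

Lemma tsP T : transfer_systemb T ->
  [/\ forall a, a \in T -> is_arrow a,
      forall H, (H, H) \in T,
      forall H K L, (H, K) \in T -> (K, L) \in T -> (H, L) \in T,
      forall H K (g : gT), (H, K) \in T -> ((H :^ g)%G, (K :^ g)%G) \in T &
      forall H K L, (H, K) \in T -> L \subset K -> ((H :&: L)%G, L) \in T].
Proof.
case/and5P => /forall_inP A /forallP B /forallP C /forallP D /forallP E; split.
- exact: A.
- exact: B.
- move=> H K L h1 h2; move/forallP: (C H) => /(_ K) /forallP /(_ L) /implyP; apply.
  by rewrite h1 h2.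
- move=> H K g h; move/forallP: (D H) => /(_ K) /forallP /(_ g) /implyP; exact.
- move=> H K L h1 h2; move/forallP: (E H) => /(_ K) /forallP /(_ L) /implyP; apply.
  by rewrite h1 h2.
Qed.

Lemma tsI T :
  (forall a, a \in T -> is_arrow a) ->
  (forall H, (H, H) \in T) ->
  (forall H K L, (H, K) \in T -> (K, L) \in T -> (H, L) \in T) ->
  (forall H K (g : gT), (H, K) \in T -> ((H :^ g)%G, (K :^ g)%G) \in T) ->
  (forall H K L, (H, K) \in T -> L \subset K -> ((H :&: L)%G, L) \in T) ->
  transfer_systemb T.
Proof.
move=> A B C D E; apply/and5P; split.
- by apply/forall_inP.
- by apply/forallP.
- apply/forallP => H; apply/forallP => K; apply/forallP => L; apply/implyP.
  by case/andP; apply: C.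
- apply/forallP => H; apply/forallP => K; apply/forallP => g; apply/implyP; exact: D.
- apply/forallP => H; apply/forallP => K; apply/forallP => L; apply/implyP.
  by case/andP; apply: E.
Qed.

Lemma genP S a :
  reflect (forall T, transfer_systemb T -> S \subset T -> a \in T) (a \in generated S).
Proof.
rewrite inE; apply: (iffP forallP) => h T.
  by move=> tT sT; move/implyP: (h T); apply; rewrite tT sT.
by apply/implyP => /andP[]; apply: h.
Qed.

Lemma gen_min S T : transfer_systemb T -> S \subset T -> generated S \subset T.
Proof. by move=> tT sT; apply/subsetP => a /genP; apply. Qed.

Lemma gen_sub S : S \subset generated S.
Proof. by apply/subsetP => a aS; apply/genP => T _ /subsetP; apply. Qed.

Lemma ts_allA : transfer_systemb allA.
Proof.
apply: tsI.
- by move=> a; rewrite inE.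
- by move=> H; rewrite inE /is_arrow.
- by move=> H K L; rewrite !inE /is_arrow /=; apply: subset_trans.
- by move=> H K g; rewrite !inE /is_arrow /= conjSg.
- by move=> H K L _ _; rewrite inE /is_arrow /= subsetIr.
Qed.

Lemma gen_ts S : S \subset allA -> transfer_systemb (generated S).
Proof.
move=> SA; apply: tsI.
- move=> a /(subsetP (gen_min ts_allA SA)); by rewrite inE.
- move=> H; apply/genP => T /tsP[]; auto.
- move=> H K L /genP h1 /genP h2; apply/genP => T tT sT.
  case/tsP: (tT) => _ _ C _ _; by apply: (C _ K); [exact: h1 T tT sT | exact: h2 T tT sT].
- move=> H K g /genP h1; apply/genP => T tT sT.
  by case/tsP: (tT) => _ _ _ D _; apply: D; exact: h1 T tT sT.
- move=> H K L /genP h1 LK; apply/genP => T tT sT.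
  by case/tsP: (tT) => _ _ _ _ E; apply: (E _ K _ _ LK); exact: h1 T tT sT.
Qed.

Lemma gen_trans S X : S \subset allA -> X \subset generated S ->
  generated X \subset generated S.
Proof. by move=> SA XS; apply: gen_min => //; apply: gen_ts. Qed.

Lemma gen_mono S X : S \subset allA -> X \subset S ->
  generated X \subset generated S.
Proof. by move=> SA XS; apply: gen_trans => //; apply: subset_trans (gen_sub S). Qed.

Lemma gen_arrow S a : S \subset allA -> a \in generated S -> is_arrow a.
Proof. by move=> SA /(subsetP (gen_min ts_allA SA)); rewrite inE. Qed.

Lemma Pfac_mono H K : H \subset K -> Pfac H <= Pfac K.
Proof. by move=> HK; apply: pf_mono; [apply: cardG_gt0 | apply: cardSg]. Qed.

Lemma Pfac_strict H K : H \subset K -> H != K :> {set gT} -> Pfac H < Pfac K.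
Proof.
move=> HK nHK; apply: pf_strict; [apply: cardG_gt0 | exact: cardSg | ].
by apply: proper_card; rewrite properEneq nHK HK.
Qed.

Lemma Pfac_conj H (g : gT) : Pfac (H :^ g)%G = Pfac H.
Proof. by rewrite /Pfac /= cardJg. Qed.

Lemma levelA X N a : X \subset allA -> a \in generated X -> N <= lvl a ->
  a \in generated (level_set X N).
Proof.
move=> XA aX Na.
have XNA : level_set X N \subset allA.
  by apply: subset_trans XA; apply/subsetP => b; rewrite inE => /andP[].
have sub1 : generated (level_set X N) \subset generated X.
  by apply: gen_mono => //; apply/subsetP => b; rewrite inE => /andP[].
set W := [set b | (b \in generated (level_set X N)) ||
                  ((b \in generated X) && (lvl b < N))].
have WE : forall b, (b \in W) = (b \in generated (level_set X N)) ||
                  ((b \in generated X) && (lvl b < N)) by move=> b; rewrite inE.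
have WX : forall b, b \in W -> b \in generated X.
  by move=> b; rewrite WE => /orP[/(subsetP sub1)|/andP[]].
have tsX := tsP (gen_ts XA); have tsN := tsP (gen_ts XNA).
case: tsX => aX' idX cX jX rX; case: tsN => aN idN cN jN rN.
have tW : transfer_systemb W.
  apply: tsI.
  - by move=> b /WX; apply: aX'.
  - by move=> H; rewrite WE idN.
  - move=> H K L hK kL; have HK : H \subset K by apply: (aX' _ (WX _ hK)).
    case: (ltnP (Pfac H) N) => hN.
      by rewrite WE (cX _ _ _ (WX _ hK) (WX _ kL)) /lvl /= hN orbT.
    move: hK; rewrite WE /lvl /= ltnNge hN andbF orbF => hK.
    move: kL; rewrite WE /lvl /= ltnNge (leq_trans hN (Pfac_mono HK)) andbF orbF => kL.
    by rewrite WE (cN _ _ _ hK kL).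
  - move=> H K g; rewrite !WE /lvl /= Pfac_conj => /orP[h|/andP[h ->]].
      by rewrite jN.
    by rewrite jX // orbT.
  - move=> H K L hK LK; case: (ltnP (Pfac (H :&: L)%G) N) => hN.
      by rewrite WE (rX _ _ _ (WX _ hK) LK) /lvl /= hN orbT.
    have hN' : N <= Pfac H by apply: (leq_trans hN); apply: Pfac_mono; apply: subsetIl.
    move: hK; rewrite WE /lvl /= ltnNge hN' andbF orbF => hK.
    by rewrite WE (rN _ _ _ hK LK).
have XW : X \subset W.
  apply/subsetP => x xX; rewrite WE; case: (ltnP (lvl x) N) => xN.
    by rewrite (subsetP (gen_sub X) _ xX) orbT.
  by rewrite (subsetP (gen_sub _)) // inE xX /=.
move: (subsetP (gen_min tW XW) _ aX); rewrite WE => /orP[//|/andP[_]].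
by rewrite ltnNge Na.
Qed.


Lemma gen_tsP S : S \subset allA ->
  [/\ forall a, a \in generated S -> is_arrow a,
      forall H, (H, H) \in generated S,
      forall H K L, (H, K) \in generated S -> (K, L) \in generated S -> (H, L) \in generated S,
      forall H K (g : gT), (H, K) \in generated S -> ((H :^ g)%G, (K :^ g)%G) \in generated S &
      forall H K L, (H, K) \in generated S -> L \subset K -> ((H :&: L)%G, L) \in generated S].
Proof. by move=> SA; apply: tsP; apply: gen_ts. Qed.

Lemma levelC U D n a : U \subset allA -> D \subset allA ->
  (forall u, u \in U -> n < lvl u) -> (forall d, d \in D -> lvl d = n) ->
  a \in generated (U :|: D) -> lvl a = n ->
  (a \in generated U) \/ exists2 d, d \in D & a \in generated (U :|: [set d]).
Proof.
move=> UA DA Ulv Dlv aUD an.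
have UDA : U :|: D \subset allA by rewrite subUset UA DA.
have UdA : forall d, d \in D -> U :|: [set d] \subset allA.
  by move=> d dD; rewrite subUset UA sub1set (subsetP DA).
have sU : generated U \subset generated (U :|: D) by apply: gen_mono => //; apply: subsetUl.
have sUd : forall d, d \in D -> generated (U :|: [set d]) \subset generated (U :|: D).
  move=> d dD; apply: gen_mono => //; apply/subsetP => x; rewrite !inE.
  by case/orP => [->//|/eqP ->]; rewrite dD orbT.
have sU' : forall d, d \in D -> generated U \subset generated (U :|: [set d]).
  by move=> d dD; apply: gen_mono; [apply: UdA | apply: subsetUl].
have F : forall b, b \in generated (U :|: D) -> n < lvl b -> b \in generated U.
  move=> b bUD nb; have := levelA UDA bUD nb.
  apply/subsetP; apply: gen_mono => //; apply/subsetP => x; rewrite !inE.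
  by case/andP => /orP[//|xD]; rewrite -/(lvl x) Dlv // ltnn.
set W := [set b | ((b \in generated (U :|: D)) && (lvl b != n)) || (b \in generated U)
                  || [exists d in D, b \in generated (U :|: [set d])]].
have WE : forall b, (b \in W) = ((b \in generated (U :|: D)) && (lvl b != n)) || (b \in generated U)
                  || [exists d in D, b \in generated (U :|: [set d])] by move=> b; rewrite inE.
have WX : forall b, b \in W -> b \in generated (U :|: D).
  move=> b; rewrite WE => /orP[/orP[/andP[]//|/(subsetP sU)//]|/exists_inP[d dD]].
  exact/subsetP/sUd.
have sUW : generated U \subset W by apply/subsetP => b bU; rewrite WE bU orbT.
have sUdW : forall d, d \in D -> generated (U :|: [set d]) \subset W.
  by move=> d dD; apply/subsetP => b bU; rewrite WE; apply/orP; right; apply/exists_inP; exists d.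
have piece : forall b, b \in W -> lvl b = n -> exists P : {set arrow gT},
    [/\ transfer_systemb P, generated U \subset P, P \subset W & b \in P].
  move=> b; rewrite WE => /orP[/orP[/andP[_ /eqP //]|bU]|/exists_inP[d dD bd]] _.
    by exists (generated U); split => //; apply: gen_ts.
  exists (generated (U :|: [set d])); split => //; [exact: gen_ts (UdA d dD)|exact: sU'|exact: sUdW].
case: (gen_tsP UDA) => aX idX cX jX rX.
case: (gen_tsP UA) => aU idU cU jU rU.
have tW : transfer_systemb W.
  apply: tsI.
  - by move=> b /WX; apply: aX.
  - by move=> H; rewrite WE idU orbT.
  - move=> H K L hK kL; have HK : H \subset K by apply: (aX _ (WX _ hK)).
    case: (eqVneq (Pfac H) n) => hn; last first.
      by rewrite WE (cX _ _ _ (WX _ hK) (WX _ kL)) /lvl /= hn.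
    have [P [tP UP PW hP]] := piece _ hK hn.
    case: (eqVneq (H : {set gT}) K) => eHK.
      by have -> : H = K by apply: val_inj.
    have kU : (K, L) \in generated U.
      apply: F; first exact: WX.
      by rewrite /lvl /= -hn; apply: Pfac_strict.
    case/tsP: tP => _ _ cP _ _; apply: (subsetP PW); apply: (cP _ K) => //.
    exact: (subsetP UP).
  - move=> H K g; rewrite !WE /lvl /= Pfac_conj.
    case/orP => [/orP[/andP[h ->]|h]|/exists_inP[d dD h]].
    + by rewrite jX.
    + by rewrite jU // orbT.
    + apply/orP; right; apply/exists_inP; exists d => //.
      by case/tsP: (gen_ts (UdA d dD)) => _ _ _ jP _; apply: jP.
  - move=> H K L hK LK; case: (eqVneq (Pfac (H :&: L)%G) n) => hn; last first.
      by rewrite WE (rX _ _ _ (WX _ hK) LK) /lvl /= hn.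
    case: (eqVneq (Pfac H) n) => hn'.
      have [P [tP UP PW hP]] := piece _ hK hn'.
      by case/tsP: tP => _ _ _ _ rP; apply: (subsetP PW); apply: (rP _ K).
    have hU : (H, K) \in generated U.
      apply: F; first exact: WX.
      rewrite /lvl /= ltn_neqAle eq_sym hn' -hn /=; exact: (@Pfac_mono (H :&: L)%G H (subsetIl H L)).
    by apply: (subsetP sUW); apply: (rU _ K).
have XW : U :|: D \subset W.
  apply/subsetP => x; rewrite inE => /orP[xU|xD].
    by apply: (subsetP sUW); apply: (subsetP (gen_sub U)).
  by apply: (subsetP (sUdW x xD)); apply: (subsetP (gen_sub _)); rewrite !inE eqxx orbT.
move: (subsetP (gen_min tW XW) _ aUD); rewrite WE an eqxx andbF /=.
by case/orP => [aU0|/exists_inP[d dD ad]]; [left|right; exists d].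
Qed.

Lemma mgsA S T : minimal_generating_set S T -> S \subset allA.
Proof.
case=> /forall_inP h _ _ _; apply/subsetP => a aS; rewrite inE.
by case/andP: (h a aS).
Qed.

Lemma mgsTA S T : minimal_generating_set S T -> T \subset allA.
Proof.
move=> m; have SA := mgsA m; case: m => _ _ <- _.
by apply/subsetP => a aT; rewrite inE; apply: gen_arrow aT.
Qed.

Lemma keyGen T X x (E : {set arrow gT}) : minimal_generating_set X T -> x \in X ->
  E \subset level_set T (lvl x).+1 :|: (X :\ x) -> x \notin generated E.
Proof.
move=> m xX EU; have XA := mgsA m; have TA := mgsTA m.
case: m => _ XT gX pX.
have XxA : X :\ x \subset allA by apply: subset_trans XA; apply: subsetDl.
have sE : generated E \subset generated (X :\ x).
  apply: gen_trans => //; apply: (subset_trans EU); rewrite subUset; apply/andP; split.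
    apply/subsetP => e; rewrite inE => /andP[eT le].
    rewrite -gX in eT; have := levelA XA eT le.
    apply/subsetP; apply: gen_mono => //; apply/subsetP => z; rewrite !inE.
    case/andP => -> lz; rewrite andbT; apply/eqP => zx; move: lz; rewrite zx ltnn.
    by [].
  exact: gen_sub.
apply/negP => /(subsetP sE) xg.
have : X \subset generated (X :\ x).
  apply/subsetP => z zX; case: (eqVneq z x) => [->//|zx].
  by apply: (subsetP (gen_sub _)); rewrite !inE zx.
move/(gen_trans XxA); rewrite gX => TX.
by move: (pX x xX); rewrite properE TX andbF.
Qed.

Lemma step T X Y x : minimal_generating_set X T -> minimal_generating_set Y T ->
  x \in X -> exists y, [/\ y \in Y, lvl y = lvl x &
    x \in generated (level_set T (lvl x).+1 :|: [set y])].
Proof.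
move=> mX mY xX; have YA := mgsA mY; have TA := mgsTA mY.
set n := lvl x; set U := level_set T n.+1.
set D := [set y in Y | lvl y == n].
have xT : x \in generated Y by case: mY => _ _ -> _; case: mX => _ /subsetP XT _ _; exact: XT.
have xYn := levelA YA xT (leqnn n).
have UA : U \subset allA by apply: subset_trans TA; apply/subsetP => u; rewrite inE => /andP[].
have DA : D \subset allA by apply: subset_trans YA; apply/subsetP => u; rewrite inE => /andP[].
have xUD : x \in generated (U :|: D).
  move: xYn; apply/subsetP; apply: gen_mono; first by rewrite subUset UA DA.
  apply/subsetP => y; rewrite !inE => /andP[yY ly]; rewrite yY /=.
  rewrite -/(lvl y); case: (eqVneq (lvl y) n) => [->|ne]; first by rewrite orbT.
  have yT : y \in T by case: mY => _ /subsetP YT _ _; apply: YT.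
  by rewrite yT /= ltn_neqAle eq_sym ne ly.
have := levelC UA DA _ _ xUD (erefl n).
case.
- by move=> u; rewrite inE => /andP[].
- by move=> d; rewrite inE => /andP[_ /eqP].
- move=> xU; exfalso; move/negP: (keyGen mX xX (subsetUl U (X :\ x))); apply; exact: xU.
- case=> y; rewrite inE => /andP[yY /eqP ly] xy; exists y; split => //.
Qed.

Definition relb T (x y : arrow gT) :=
  [&& lvl y == lvl x, x \in generated (level_set T (lvl x).+1 :|: [set y]) &
      y \in generated (level_set T (lvl x).+1 :|: [set x])].

Lemma relP T X Y x : minimal_generating_set X T -> minimal_generating_set Y T ->
  x \in X -> exists y, (y \in Y) && relb T x y.
Proof.
move=> mX mY xX; have TA := mgsTA mX.
have [y [yY ly xy]] := step mX mY xX.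
have [x' [x'X lx' yx']] := step mY mX yY.
rewrite ly in lx' yx'.
set U := level_set T (lvl x).+1.
have UA : U \subset allA by apply: subset_trans TA; apply/subsetP => u; rewrite inE => /andP[].
have x'A : U :|: [set x'] \subset allA.
  by rewrite subUset UA sub1set (subsetP (mgsA mX)).
have xx' : x \in generated (U :|: [set x']).
  move: xy; apply/subsetP; apply: gen_trans => //.
  rewrite subUset; apply/andP; split.
    by apply: subset_trans (gen_sub _); apply: subsetUl.
  by rewrite sub1set.
case: (eqVneq x' x) => [ex|nx].
  by subst x'; exists y; rewrite yY /relb ly eqxx xy yx'.
have K : U :|: [set x'] \subset level_set T (lvl x).+1 :|: (X :\ x).
  by apply: setUS; rewrite sub1set !inE nx; exact: x'X.
by move: (keyGen mX xX K); rewrite xx'.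
Qed.

Lemma dir T X Y : minimal_generating_set X T -> minimal_generating_set Y T ->
  exists f : arrow gT -> arrow gT,
    [/\ {in X &, injective f}, f @: X \subset Y & forall x, x \in X -> lvl (f x) = lvl x].
Proof.
move=> mX mY.
pose f x := odflt x [pick y in Y | relb T x y].
have fP : forall x, x \in X -> (f x \in Y) && relb T x (f x).
  move=> x xX; rewrite /f; case: pickP => [y /= -> //|none].
  by have [y] := relP mX mY xX; rewrite none.
exists f; split.
- move=> x1 x2 x1X x2X e.
  case/andP: (fP _ x1X) => _ /and3P[/eqP l1 h1 _].
  case/andP: (fP _ x2X) => _ /and3P[/eqP l2 _ h2].
  rewrite e in l1 h1.
  have TA := mgsTA mX.
  set U := level_set T (lvl x1).+1.
  have UA : U \subset allA by apply: subset_trans TA; apply/subsetP => u; rewrite inE => /andP[].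
  have l12 : lvl x2 = lvl x1 by rewrite -l2 -l1.
  rewrite l12 -/U in h2.
  have x2A : U :|: [set x2] \subset allA.
    by rewrite subUset UA sub1set (subsetP (mgsA mX)).
  have xx : x1 \in generated (U :|: [set x2]).
    move: h1; apply/subsetP; apply: gen_trans => //.
    rewrite subUset; apply/andP; split.
      by apply: subset_trans (gen_sub _); apply: subsetUl.
    by rewrite sub1set.
  case: (eqVneq x1 x2) => // nx.
  have K : U :|: [set x2] \subset level_set T (lvl x1).+1 :|: (X :\ x1).
    by apply: setUS; rewrite sub1set !inE eq_sym nx.
  by move: (keyGen mX x1X K); rewrite xx.
- by apply/subsetP => _ /imsetP[x xX ->]; case/andP: (fP _ xX).
- by move=> x xX; case/andP: (fP _ xX) => _ /and3P[/eqP].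
Qed.

End TS.

Theorem proposition2p13 (gT : finGroupType) (T S R : {set arrow gT}) :
  transfer_system T ->
  minimal_generating_set S T ->
  minimal_generating_set R T ->
  exists f : arrow gT -> arrow gT,
    [/\ {in S &, injective f}, f @: S = R &
        forall (n : nat) (s : arrow gT),
          s \in level_set S n :\: level_set S n.+1 ->
          f s \in level_set R n :\: level_set R n.+1].
Proof.
move=> _ mS mR.
have [f [fi fS fl]] := dir mS mR.
have [g [gi gR _]] := dir mR mS.
exists f; split => //.
- apply/eqP; rewrite eqEcard fS /= card_in_imset //.
  rewrite -(card_in_imset gi); exact: subset_leq_card.
- move=> n s; rewrite !inE => /andP[h /andP[sS ls]].
  have fsR : f s \in R by apply: (subsetP fS); apply: imset_f.
  have := fl s sS; rewrite /lvl => ->.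
  by rewrite fsR ls /= andbT; move: h; rewrite sS.
Qed.
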